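(* Let $d\ge1$, $\Theta\subseteq\mathbb{R}$, and let $g:\Theta\to\mathbb{R}$ be continuously differentiable, one-to-one, with $\mathrm{d}g/\mathrm{d}\theta\neq0$ on $\Theta$, applied entrywise. Let $\boldsymbol{\theta}\in\Theta^d$ be a random vector with marginal distribution $p_{\boldsymbol{\theta}}$, let $\mathbf{x}_0=g(\boldsymbol{\theta})$ with distribution $p_{\mathbf{x}_0}$, and for $t\in[\epsilon,1]$ let $p_{\mathbf{x}_t\mid\mathbf{x}_0}(\cdot\mid\mathbf{x}_0)$ be the density of $\mathcal{N}(\sqrt{\alpha_t}\,\mathbf{x}_0,\,v_t\mathbf{I}_d)$, where $\alpha_t=\exp(-\int_0^t\beta(s)\,\mathrm{d}s)$, $v_t=1-\alpha_t$, $\beta:\mathbb{R}\to\mathbb{R}_+$. Let $\mathbf{T}_{\boldsymbol{\theta}}:\Theta^d\to\mathbb{R}^{k}$ be a measurable function and $\boldsymbol{\zeta}:\mathbb{R}^d\to\mathbb{R}^{k}$ a Lipschitz continuous function. Suppose $$\mathbb{E}_{\boldsymbol{\theta}\sim p_{\boldsymbol{\theta}}}\big[\|\mathbf{T}_{\boldsymbol{\theta}}(\boldsymbol{\theta})\|\big]<\infty,\qquad \mathbb{E}_{\boldsymbol{\theta}\sim p_{\boldsymbol{\theta}}}\big[\|g(\boldsymbol{\theta})\|\,\|\mathbf{T}_{\boldsymbol{\theta}}(\boldsymbol{\theta})\|\big]<\infty.$$ Then for all $t\in[\epsilon,1]$, $$\int p_{\mathbf{x}_0}(\mathbf{x}_0)\int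 p_{\mathbf{x}_t\mid\mathbf{x}_0}(\mathbf{x}_t\mid\mathbf{x}_0)\,\big|\boldsymbol{\zeta}(\mathbf{x}_t)^{\top}\mathbf{T}_{\boldsymbol{\theta}}(g^{-1}(\mathbf{x}_0))\big|\,\mathrm{d}\mathbf{x}_t\,\mathrm{d}\mathbf{x}_0<\infty.$$
   Context: $\|\cdot\|$ is the Euclidean norm and $\epsilon>0$ is a small constant. In the paper, $\mathbf{T}_{\boldsymbol{\theta}}$ is the sufficient statistic (valued in $\mathbb{R}^{2d}$) of the natural conjugate prior of a one-parameter exponential-family likelihood, and $\boldsymbol{\zeta}$ gives the hyperparameters of that prior as a function of $\mathbf{x}_t$. *)

(* Defs.v *)
From HB Require Import structures.
From mathcomp Require Import all_boot all_order all_algebra.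
From mathcomp Require Import all_classical all_reals all_analysis.
Set Implicit Arguments. Unset Strict Implicit. Unset Printing Implicit Defensive.
Import Order.TTheory GRing.Theory Num.Theory.
Import numFieldNormedType.Exports.
Local Open Scope classical_set_scope.
Local Open Scope ring_scope.

Section defs.
Variable R : realType.

Definition enorm n (x : n.-tuple R) : R :=
  Num.sqrt (\sum_(i < n) (tnth x i) ^+ 2).

Definition dotp n (a b : n.-tuple R) : R := \sum_(i < n) tnth a i * tnth b i.

Definition emap n (f : R -> R) (x : n.-tuple R) : n.-tuple R := map_tuple f x.

Definition tsub n (x y : n.-tuple R) : n.-tuple R :=
  [tuple tnth x i - tnth y i | i < n].
Definition tscale n (c : R) (x : n.-tuple R) : n.-tuple R := map_tuple ( *%R c) x.

Definition in_pow n (Theta : set R) : set (n.-tuple R) :=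
  [set x | forall i : 'I_n, Theta (tnth x i)].

(* Inverse of g on its image g(Theta): g^{-1}(y) is the (unique, when g is
   injective on Theta) theta in Theta with g theta = y; an arbitrary value (0)
   outside g(Theta). *)
Definition inv_on (Theta : set R) (g : R -> R) (y : R) : R :=
  xget 0 [set th | Theta th /\ g th = y].

Definition lipschitz_fun n m (f : n.-tuple R -> m.-tuple R) : Prop :=
  exists L : R, forall x y, enorm (tsub (f x) (f y)) <= L * enorm (tsub x y).

Definition alpha_t (beta : R -> R) (t : R) : R :=
  expR (- Rintegral (@lebesgue_measure R) `[0, t] beta).
Definition v_t (beta : R -> R) (t : R) : R := 1 - alpha_t beta t.

Definition gauss_pdf n (mu : n.-tuple R) (v : R) (x : n.-tuple R) : R :=
  (Num.sqrt (v * pi *+ 2)) ^- n * expR (- (enorm (tsub x mu)) ^+ 2 / (v *+ 2)).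

(* Lebesgue integral over R^n of a nonnegative function, computed as the
   n-fold iterated one-dimensional Lebesgue integral (equal to the integral
   w.r.t. n-dimensional Lebesgue measure by Tonelli). *)
Fixpoint lebRd (n : nat) : (n.-tuple R -> \bar R) -> \bar R :=
  match n return (n.-tuple R -> \bar R) -> \bar R with
  | 0 => fun f => f [tuple]
  | n'.+1 => fun f =>
      (\int[@lebesgue_measure R]_x lebRd (fun t : n'.-tuple R => f (cons_tuple x t)))%E
  end.

End defs.
Arguments in_pow {R} n Theta.

(* Main.v *)
Require Import Defs.
From HB Require Import structures.
From mathcomp Require Import all_boot all_order all_algebra.
From mathcomp Require Import all_classical all_reals all_analysis.
From mathcomp Require Import measurable_realfun.
From mathcomp Require Import ring lra.
Import Order.TTheory GRing.Theory Num.Theory.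
Import numFieldNormedType.Exports.
Local Open Scope classical_set_scope.
Local Open Scope ring_scope.

Section gen.
Local Open Scope ereal_scope.
Context d (T : measurableType d) (R : realType).
Import HBNNSimple.

Lemma int_mono (mu : {measure set T -> \bar R}) (f g : T -> \bar R) :
  (forall x, 0 <= f x) -> (forall x, f x <= g x) ->
  \int[mu]_x f x <= \int[mu]_x g x.
Proof.
move=> f0 fg.
have g0 x : 0 <= g x by apply: le_trans (f0 x) (fg x).
rewrite !ge0_integralTE//.
apply: ge_ereal_sup => _ [h hf <-]; apply: ereal_sup_ubound; exists h => //.
by move=> x; apply: le_trans (hf x) (fg x).
Qed.

Lemma int_mono_ae (mu : {measure set T -> \bar R}) (N : set T) (f g : T -> \bar R) :
  measurable N -> mu N = 0 ->
  (forall x, 0 <= f x) -> (forall x, 0 <= g x) -> (forall x, ~ N x -> f x <= g x) ->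
  \int[mu]_x f x <= \int[mu]_x g x.
Proof.
move=> mN N0 f0 g0 fg.
rewrite [X in X <= _]ge0_integralTE//.
apply: ge_ereal_sup => _ [h hf <-].
have := integral_nnsfun mu measurableT h; rewrite patch_setT => <-.
rewrite [X in X <= _](@ge0_negligible_integral _ _ _ mu setT N _ mN measurableT)//; last 2 first.
  by apply/measurable_EFinP; exact: measurable_funP.
  by move=> x _; rewrite lee_fin.
rewrite integral_mkcond; apply: int_mono.
  by move=> x; rewrite patchE; case: ifP => // _; rewrite lee_fin.
move=> x; rewrite patchE; case: ifPn => // /set_mem [_ Nx].
exact: le_trans (hf x) (fg x Nx).
Qed.

End gen.

Section push.
Local Open Scope ereal_scope.
Context d1 d2 (X : measurableType d1) (Y : measurableType d2) (R : realType).
Import HBNNSimple.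

Lemma int_push (mu : {measure set X -> \bar R}) (phi : X -> Y)
  (mphi : measurable_fun setT phi) (f : Y -> \bar R) :
  (forall y, 0 <= f y) ->
  \int[pushforward mu phi]_y f y <= \int[mu]_x f (phi x).
Proof.
move=> f0.
rewrite [X in X <= _](@ge0_integralTE _ _ _ (pushforward mu phi))//.
apply: ge_ereal_sup => _ [h hf <-].
have := @integral_nnsfun _ _ _ (pushforward mu phi) _ measurableT h; rewrite patch_setT => <-.
rewrite ge0_integral_pushforward//; last by move=> y _; rewrite lee_fin.
rewrite preimage_setT; apply: int_mono.
  by move=> x; rewrite /= lee_fin.
by move=> x; apply: hf.
Unshelve. by apply/measurable_EFinP; exact: measurable_funP.
Qed.

End push.

Section L.
Context (R : realType).
Local Open Scope ereal_scope.

Lemma lebRd_ge0 n (f : n.-tuple R -> \bar R) : (forall x, 0 <= f x) -> 0 <= lebRd f.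
Proof.
elim: n f => [|n IH] f f0 /=; first exact: f0.
by apply: integral_ge0 => x _; apply: IH.
Qed.

Lemma lebRd_le n (f g : n.-tuple R -> \bar R) : (forall x, 0 <= f x) ->
  (forall x, f x <= g x) -> lebRd f <= lebRd g.
Proof.
elim: n f g => [|n IH] f g f0 fg /=; first exact: fg.
apply: int_mono => x; first by apply: lebRd_ge0.
by apply: IH.
Qed.

Lemma lebRd_prod n (K I : R) (f : nat -> R -> R) : (0 <= K)%R ->
  (forall j u, 0 <= f j u)%R -> (forall j, measurable_fun setT (f j)) ->
  (forall j, \int[@lebesgue_measure R]_u (f j u)%:E <= I%:E) ->
  lebRd (fun x : n.-tuple R => (K * \prod_(j < n) f j (tnth x j))%:E) <= (K * I ^+ n)%:E.
Proof.
elim: n K f => [|n IH] K f K0 f0 mf fI /=.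
  by rewrite big_ord0 expr0.
have I0 : (0 <= I)%R.
  by rewrite -lee_fin; apply: le_trans (fI 0%N); apply: integral_ge0 => x _; rewrite lee_fin.
apply: (@le_trans _ _ (\int[@lebesgue_measure R]_x ((K * I ^+ n)%:E * (f 0%N x)%:E))).
  apply: int_mono => x.
    by apply: lebRd_ge0 => t; rewrite lee_fin mulr_ge0// prodr_ge0.
  have -> : (fun t : n.-tuple R => (K * \prod_(j < n.+1) f j (tnth (cons_tuple x t) j))%:E)
    = (fun t : n.-tuple R => ((K * f 0%N x) * \prod_(j < n) f j.+1 (tnth t j))%:E).
    apply: funext => t; rewrite big_ord_recl mulrA; congr ((_ * _) * _)%:E.
    by apply: eq_bigr => j _; rewrite tnthS.
  apply: le_trans (IH _ (fun j => f j.+1) _ _ _ _) _ => //.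
  - by rewrite mulr_ge0.
  - by rewrite -EFinM lee_fin mulrAC.
rewrite ge0_integralZl//.
all: try by move=> x _; rewrite lee_fin.
all: try by rewrite lee_fin mulr_ge0// exprn_ge0.
all: try by apply/measurable_EFinP.
  rewrite exprSr mulrA (EFinM (K * I ^+ n)).
  apply: lee_wpmul2l => //.
  by rewrite lee_fin mulr_ge0// exprn_ge0.
apply: measurableT_comp => //; exact: (mf 0%N).
Qed.
End L.

Set Implicit Arguments. Unset Strict Implicit.

Section P.
Context (R : realType).

Lemma enorm_ge0 n (a : n.-tuple R) : 0 <= enorm a.
Proof. exact: sqrtr_ge0. Qed.

Lemma coord_le n (a : n.-tuple R) i : `|tnth a i| <= enorm a.
Proof.
rewrite /enorm -sqrtr_sqr ler_sqrt; last by rewrite sumr_ge0// => j _; rewrite sqr_ge0.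
by rewrite (bigD1 i)//= lerDl sumr_ge0// => j _; rewrite sqr_ge0.
Qed.

Lemma enorm_le_l1 n (a : n.-tuple R) : enorm a <= \sum_(i < n) `|tnth a i|.
Proof.
have s0 : 0 <= \sum_(i < n) `|tnth a i| by rewrite sumr_ge0.
rewrite /enorm -(ger0_norm s0) -sqrtr_sqr ler_sqrt ?sqr_ge0//.
rewrite expr2 mulr_suml; apply: ler_sum => i _.
rewrite -real_normK ?num_real// expr2 ler_wpM2l//.
by rewrite (bigD1 i)//= lerDl sumr_ge0.
Qed.

Lemma dotp_le n (a b : n.-tuple R) : `|dotp a b| <= \sum_(i < n) `|tnth a i| * `|tnth b i|.
Proof.
rewrite /dotp; apply: le_trans (ler_norm_sum _ _ _) _.
by apply: ler_sum => i _; rewrite normrM.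
Qed.

Lemma prod_ge_sum n (y : 'I_n -> R) : (forall i, 0 <= y i) ->
  1 + \sum_(i < n) y i <= \prod_(i < n) (1 + y i).
Proof.
elim: n y => [|n IH] y y0; first by rewrite big_ord0 big_ord0 addr0.
rewrite big_ord_recr big_ord_recr /=.
have := IH (fun i => y (widen_ord (leqnSn n) i)) (fun i => y0 _).
set S := \sum_(i < n) _; set P := \prod_(i < n) _ => h.
have P1 : 1 <= P by apply: le_trans h; rewrite lerDl sumr_ge0.
have := y0 ord_max; set z := y ord_max => z0.
rewrite mulrDr mulr1 addrA; apply: lerD => //.
by rewrite -[X in X <= _]mul1r ler_wpM2r.
Qed.

End P.

Section Q.
Context (R : realType).

Lemma g1_le (v : R) (v0 : 0 < v) (y : R) :
  (1 + `|y|) * expR (- y ^+ 2 / (v *+ 2)) <= (2 + v *+ 4) * expR (- y ^+ 2 / (v *+ 4)).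
Proof.
set E := expR (- y ^+ 2 / (v *+ 4)).
have E0 : 0 < E by apply: expR_gt0.
have -> : expR (- y ^+ 2 / (v *+ 2)) = E * E.
  rewrite -expRD; congr expR.
  have v4 : v *+ 4 = (v *+ 2) * 2 by rewrite mulr_natr -mulrnA.
  rewrite v4 -mulrDl.
  have -> : - y ^+ 2 + - y ^+ 2 = (- y^+2) * 2 by rewrite mulr_natr mulr2n.
  by rewrite -mulf_div divff ?mulr1// pnatr_eq0.
have E1 : E <= 1 by rewrite -expR0 ler_expR mulNr oppr_le0 divr_ge0 ?sqr_ge0// mulrn_wge0// ltW.
have yE : y ^+ 2 * E <= v *+ 4.
  have v4 : 0 < v *+ 4 by rewrite pmulrn_lgt0.
  set z := y ^+ 2 / (v *+ 4).
  have Ez : E = (expR z)^-1 by rewrite /E mulNr expRN.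
  have hz : z <= expR z by apply: le_trans (expR_ge1Dx z); rewrite lerDr.
  have -> : y ^+ 2 = z * v *+ 4 by rewrite -mulrnAr divfK ?gt_eqF.
  rewrite Ez -mulrnAr ler_pdivrMr ?expR_gt0// [leRHS]mulrC ler_pM2r//.
rewrite mulrA ler_pM2r//.
have hy : `|y| <= 1 + y ^+ 2.
  case: (lerP `|y| 1) => hy.
    by apply: le_trans hy _; rewrite lerDl sqr_ge0.
  rewrite -real_normK ?num_real// expr2; apply: le_trans (_ : `|y| * `|y| <= _).
    by rewrite ler_peMr// ltW.
  by rewrite lerDr.
apply: (@le_trans _ _ ((2 + y ^+ 2) * E)).
  by rewrite ler_pM2r//; apply: le_trans (lerD (lexx 1) hy) _; rewrite addrA.
rewrite mulrDl; apply: lerD => //.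
by rewrite -[X in _ <= X]mulr1 ler_wpM2l.
Qed.


Lemma f1_int (v m : R) (v0 : 0 < v) :
  (\int[@lebesgue_measure R]_u ((1 + `|u - m|) * expR (- (u - m) ^+ 2 / (v *+ 2)))%:E
  <= ((2 + v *+ 4) / normal_peak (Num.sqrt (v *+ 2)))%:E)%E.
Proof.
set s := Num.sqrt (v *+ 2).
have s0 : s != 0 by rewrite gt_eqF// sqrtr_gt0 pmulrn_lgt0.
have nf u : normal_fun m s u = expR (- (u - m) ^+ 2 / (v *+ 4)).
  by rewrite /normal_fun sqr_sqrtr ?mulrn_wge0 ?ltW// -mulrnA.
have pk : normal_peak s != 0 by rewrite gt_eqF// normal_peak_gt0.
apply: (@le_trans _ _ (\int[@lebesgue_measure R]_u ((2 + v *+ 4) * normal_fun m s u)%:E)%E).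
  apply: int_mono => u.
    by rewrite lee_fin mulr_ge0// ?expR_ge0// addr_ge0.
  by rewrite lee_fin nf; apply: g1_le.
have -> : (fun u => ((2 + v *+ 4) * normal_fun m s u)%:E) =
  (fun u => ((2 + v *+ 4) / normal_peak s)%:E * (normal_pdf m s u)%:E)%E.
  apply: funext => u; rewrite normal_pdfE// -EFinM; congr EFin.
  by rewrite mulrA divfK.
rewrite integralZl//; last exact: integrable_normal_pdf.
by rewrite integral_normal_pdf mule1.
Qed.

End Q.

Section I.
Context (R : realType).

Definition z0 n : n.-tuple R := [tuple (0:R) | _ < n].

Lemma dot_bound d k (zeta : d.-tuple R -> k.-tuple R) (L : R)
  (Lip : forall x y, enorm (tsub (zeta x) (zeta y)) <= L * enorm (tsub x y))
  (m : d.-tuple R) (w : k.-tuple R) (x : d.-tuple R) :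
  `|dotp (zeta x) w| <= k%:R * enorm w *
     ((enorm (zeta (z0 d)) + `|L| * \sum_(j < d) `|tnth m j|)
      + `|L| * \sum_(j < d) `|tnth x j - tnth m j|).
Proof.
set A := enorm (zeta (z0 d)) + `|L| * \sum_(j < d) `|tnth m j|.
set S := \sum_(j < d) `|tnth x j - tnth m j|.
have hz i : `|tnth (zeta x) i| <= A + `|L| * S.
  have -> : tnth (zeta x) i = (tnth (zeta x) i - tnth (zeta (z0 d)) i) + tnth (zeta (z0 d)) i.
    by rewrite subrK.
  apply: le_trans (ler_normD _ _) _.
  have h1 : `|tnth (zeta x) i - tnth (zeta (z0 d)) i| <= enorm (tsub (zeta x) (zeta (z0 d))).
    by have := coord_le (tsub (zeta x) (zeta (z0 d))) i; rewrite tnth_mktuple.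
  have h2 : enorm (tsub x (z0 d)) <= \sum_(j < d) `|tnth x j - tnth m j| + \sum_(j < d) `|tnth m j|.
    apply: le_trans (enorm_le_l1 _) _.
    rewrite -big_split /=; apply: ler_sum => j _.
    rewrite !tnth_mktuple subr0.
    by rewrite -{1}(subrK (tnth m j) (tnth x j)) ler_normD.
  have h3 : L * enorm (tsub x (z0 d)) <= `|L| * enorm (tsub x (z0 d)).
    by rewrite ler_wpM2r ?enorm_ge0 ?ler_norm.
  have h4 : `|tnth (zeta (z0 d)) i| <= enorm (zeta (z0 d)) by apply: coord_le.
  have h5 := Lip x (z0 d).
  have h6 : `|L| * enorm (tsub x (z0 d)) <= `|L| * (S + \sum_(j < d) `|tnth m j|).
    by rewrite ler_wpM2l.
  rewrite /A; move: h1 h3 h4 h5 h6; rewrite mulrDr; lra.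
apply: le_trans (dotp_le _ _) _.
apply: le_trans (_ : \sum_(i < k) (A + `|L| * S) * enorm w <= _).
  apply: ler_sum => i _; apply: ler_pM => //; first exact: coord_le.
rewrite sumr_const card_ord -mulr_natl; lra.
Qed.


Lemma gauss_prod d (m : d.-tuple R) (v : R) (x : d.-tuple R) :
  gauss_pdf m v x = (Num.sqrt (v * pi *+ 2))^-d *
    \prod_(j < d) expR (- (tnth x j - tnth m j) ^+ 2 / (v *+ 2)).
Proof.
rewrite /gauss_pdf; congr (_ * _).
rewrite /enorm sqr_sqrtr; last by rewrite sumr_ge0// => j _; rewrite sqr_ge0.
rewrite -sumrN mulr_suml expR_sum; apply: eq_bigr => j _.
by rewrite tnth_mktuple.
Qed.

Definition Iv (v : R) := (2 + v *+ 4) / normal_peak (Num.sqrt (v *+ 2)).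

Lemma inner_bound d k (zeta : d.-tuple R -> k.-tuple R) (L : R)
  (Lip : forall x y, enorm (tsub (zeta x) (zeta y)) <= L * enorm (tsub x y))
  (v : R) (v0 : 0 < v) (m : d.-tuple R) (w : k.-tuple R) :
  (lebRd (fun x => (gauss_pdf m v x * `|dotp (zeta x) w|)%:E) <=
  ((Num.sqrt (v * pi *+ 2))^-d * (k%:R * enorm w *
     ((enorm (zeta (z0 d)) + `|L| * \sum_(j < d) `|tnth m j|) + `|L|)) * Iv v ^+ d)%:E)%E.
Proof.
set c := (Num.sqrt (v * pi *+ 2))^-d.
set A := enorm (zeta (z0 d)) + `|L| * \sum_(j < d) `|tnth m j|.
have c0 : 0 <= c by rewrite /c invr_ge0 exprn_ge0// sqrtr_ge0.
have A0 : 0 <= A by rewrite addr_ge0 ?enorm_ge0// mulr_ge0// sumr_ge0.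
have K0 : 0 <= c * (k%:R * enorm w * (A + `|L|)).
  by rewrite mulr_ge0// mulr_ge0// ?mulr_ge0 ?enorm_ge0// addr_ge0.
pose f := fun (j : nat) (u : R) =>
  (1 + `|u - nth 0 m j|) * expR (- (u - nth 0 m j) ^+ 2 / (v *+ 2)).
apply: le_trans (@lebRd_prod R d (c * (k%:R * enorm w * (A + `|L|))) (Iv v) f K0 _ _ _).
- apply: lebRd_le => x.
    by rewrite lee_fin mulr_ge0// gauss_prod mulr_ge0// prodr_ge0// => j _; rewrite expR_ge0.
  rewrite lee_fin gauss_prod.
  have hd := dot_bound Lip m w x.
  set S := \sum_(j < d) `|tnth x j - tnth m j| in hd.
  set P1 := \prod_(j < d) (1 + `|tnth x j - tnth m j|).
  set PE := \prod_(j < d) expR (- (tnth x j - tnth m j) ^+ 2 / (v *+ 2)).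
  have hP : 1 + S <= P1 by apply: prod_ge_sum.
  have PE0 : 0 <= PE by rewrite prodr_ge0// => j _; rewrite expR_ge0.
  have S0 : 0 <= S by rewrite sumr_ge0.
  have -> : \prod_(j < d) f j (tnth x j) = P1 * PE.
    rewrite -big_split /=; apply: eq_bigr => j _.
    by rewrite /f (tnth_nth 0 m).
  have hAS : A + `|L| * S <= (A + `|L|) * P1.
    apply: le_trans (_ : (A + `|L|) * (1 + S) <= _); last by rewrite ler_wpM2l// addr_ge0.
    rewrite mulrDr mulr1 mulrDl; have h1 := mulr_ge0 A0 S0; have h2 := normr_ge0 L; lra.
  rewrite -[X in X <= _]mulrA -[X in _ <= X]mulrA; apply: ler_wpM2l => //.
  rewrite [P1 * PE]mulrC [X in _ <= X]mulrCA; apply: ler_wpM2l => //.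
  apply: le_trans hd _; rewrite -!mulrA.
  apply: ler_wpM2l => //; apply: ler_wpM2l; [exact: enorm_ge0|exact: hAS].
- by move=> j u; rewrite mulr_ge0// ?expR_ge0// addr_ge0.
- move=> j; rewrite /f; apply: measurable_funM.
    apply: measurable_funD => //; apply: measurableT_comp => //.
    exact: measurable_funB.
  apply: measurableT_comp => //; apply: measurable_funM => //.
  apply: measurableT_comp => //; apply: measurable_funX.
  exact: measurable_funB.
- by move=> j; apply: f1_int.
Qed.

End I.

Section M.
Context (R : realType).

Lemma measurable_enorm n : measurable_fun setT (@enorm R n).
Proof.
rewrite /enorm.
apply: (measurableT_comp (continuous_measurable_fun (@sqrt_continuous R))).
apply: measurable_sum => i; apply: measurable_funX.
exact: measurable_tnth.
Qed.

Lemma measurable_emap n (g : R -> R) : measurable_fun setT g ->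
  measurable_fun setT (@emap R n g).
Proof.
move=> mg; apply/measurable_fun_tnthP => i.
have -> : (tnth (T:=R))^~ i \o emap g = g \o (tnth (T:=R))^~ i.
  by apply: funext => x /=; rewrite /emap tnth_map.
exact: measurableT_comp mg (measurable_tnth i).
Qed.

Lemma measurable_in_pow n (Theta : set R) : measurable Theta ->
  measurable (in_pow n Theta).
Proof.
move=> mT.
have -> : in_pow n Theta = \bigcap_(i in [set: 'I_n]) ((tnth (T:=R))^~ i @^-1` Theta).
  apply/seteqP; split => x /=.
    by move=> h i _; apply: h.
  by move=> h i; apply: h.
apply: fin_bigcap_measurable; first exact: finite_finset.
move=> i _; rewrite -[X in measurable X]setTI.
exact: measurable_tnth.
Qed.

End M.

Unset Implicit Arguments. Set Strict Implicit.

Lemma lebRd_ext (R : realType) n (f g : n.-tuple R -> \bar R) : (forall x, f x = g x) -> lebRd f = lebRd g.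
Proof. by move=> fg; congr lebRd; apply: funext. Qed.

Lemma lebRd_cst0 (R : realType) n : lebRd (fun _ : n.-tuple R => 0%E) = 0%E.
Proof.
elim: n => [|n IH] //=.
by rewrite IH; apply: integral0.
Qed.

Lemma inv_emap (R : realType) d (Theta : set R) (g : R -> R) (th : d.-tuple R) :
  {in Theta &, injective g} -> in_pow d Theta th ->
  emap (inv_on Theta g) (emap g th) = th.
Proof.
move=> ginj hth; apply: eq_from_tnth => i; rewrite /emap !tnth_map.
apply: xget_unique; first by split => //; apply: hth.
move=> y [Ty gy]; apply: ginj => //; rewrite inE //; exact: hth.
Qed.

Theorem lemmaI1 (R : realType) (d k : nat) (Theta : set R) (g : R -> R)
  (P : probability (d.-tuple R) R) (beta : R -> R) (eps : R)
  (T : d.-tuple R -> k.-tuple R) (zeta : d.-tuple R -> k.-tuple R) :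
  (1 <= d)%N ->
  measurable Theta ->
  measurable_fun setT g ->
  (forall th, Theta th -> derivable g th 1) ->
  {within Theta, continuous (derive1 g)} ->
  {in Theta &, injective g} ->
  (forall th, Theta th -> (derive1 g) th != 0) ->
  {ae P, forall th, in_pow d Theta th} ->
  measurable_fun setT beta ->
  (forall s, 0 < beta s) ->
  (@lebesgue_measure R).-integrable `[0, 1] (EFin \o beta) ->
  0 < eps ->
  measurable_fun (in_pow d Theta) T ->
  lipschitz_fun zeta ->
  (\int[P]_th (enorm (T th))%:E < +oo)%E ->
  (\int[P]_th (enorm (emap g th) * enorm (T th))%:E < +oo)%E ->
  forall t, eps <= t <= 1 ->
  (\int[pushforward P (emap g)]_x0
     lebRd (fun xt => (gauss_pdf (tscale (Num.sqrt (alpha_t beta t)) x0)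
                                 (v_t beta t) xt
                       * `| dotp (zeta xt) (T (emap (inv_on Theta g) x0)) |)%:E)
   < +oo)%E.
Proof.
move=> d1 mTheta mg _ _ ginj _ aeP _ _ _ _ mT [L Lip] hT hgT t _.
set v := v_t beta t; set s := Num.sqrt (alpha_t beta t).
have mG : measurable_fun setT (@emap R d g) by apply: measurable_emap.
have [v0|v0] := lerP v 0.
  have gz (m x : d.-tuple R) : gauss_pdf m v x = 0.
    rewrite /gauss_pdf ler0_sqrtr; last first.
      by rewrite mulrn_wle0// mulr_le0_ge0// pi_ge0.
    by rewrite expr0n (negbTE (lt0n_neq0 d1)) /= invr0 mul0r.
  rewrite (_ : (fun x0 => _) = fun _ => 0%E); last first.
    apply: funext => x0; rewrite -(lebRd_cst0 R d); apply: lebRd_ext => x.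
    by rewrite gz mul0r.
  by rewrite integral0.
set z := enorm (zeta (z0 R d)); set L1 := `|L|.
set c := (Num.sqrt (v * pi *+ 2))^-d.
set C0 := c * k%:R * Iv v ^+ d.
set a0 := z + L1; set a1 := L1 * d%:R * `|s|.
have c0 : 0 <= c by rewrite /c invr_ge0 exprn_ge0// sqrtr_ge0.
have I0 : 0 <= Iv v.
  by rewrite /Iv divr_ge0 ?normal_peak_ge0// addr_ge0// mulrn_wge0// ltW.
have C00 : 0 <= C0 by rewrite /C0 !mulr_ge0// exprn_ge0.
have a00 : 0 <= a0 by apply: addr_ge0; [exact: enorm_ge0|exact: normr_ge0].
have a10 : 0 <= a1 by rewrite /a1 /L1; apply: mulr_ge0; [apply: mulr_ge0|].
pose H := fun x0 : d.-tuple R => C0 * (a0 + a1 * enorm x0) * enorm (T (emap (inv_on Theta g) x0)).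
have H0 x0 : (0 <= (H x0)%:E)%E.
  rewrite lee_fin /H; apply: mulr_ge0; last exact: enorm_ge0.
  apply: mulr_ge0 => //; apply: addr_ge0 => //; apply: mulr_ge0 => //; exact: enorm_ge0.
have hin x0 : (lebRd (fun xt => (gauss_pdf (tscale s x0) v xt
      * `| dotp (zeta xt) (T (emap (inv_on Theta g) x0)) |)%:E) <= (H x0)%:E)%E.
  apply: le_trans (inner_bound Lip v0 (tscale s x0) (T (emap (inv_on Theta g) x0))) _.
  rewrite lee_fin.
  set X := \sum_(j < d) `|tnth (tscale s x0) j|.
  have hX : X <= d%:R * `|s| * enorm x0.
    apply: le_trans (_ : \sum_(j < d) `|s| * enorm x0 <= _).
      apply: ler_sum => j _; rewrite /tscale tnth_map normrM ler_wpM2l //.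
      exact: coord_le.
    by rewrite -mulrA mulr_natl sumr_const card_ord.
  set ew := enorm (T (emap (inv_on Theta g) x0)).
  have ew0 : 0 <= ew by apply: enorm_ge0.
  rewrite -subr_ge0 /H -/c -/z -/ew.
  have -> : C0 * (a0 + a1 * enorm x0) * ew -
      c * (k%:R * ew * (z + L1 * X + L1)) * Iv v ^+ d =
      (c * k%:R * Iv v ^+ d * ew * L1) * (d%:R * `|s| * enorm x0 - X).
    by rewrite /C0 /a0 /a1; ring.
  apply: mulr_ge0; last by rewrite subr_ge0.
  by rewrite /L1 !mulr_ge0 ?exprn_ge0.
apply: le_lt_trans (@int_mono _ _ _ (pushforward P (emap g)) _ (fun x0 => (H x0)%:E) _ hin) _.
  by move=> x0; apply: lebRd_ge0 => x; rewrite lee_fin mulr_ge0// gauss_prod mulr_ge0// prodr_ge0// => j _; rewrite expR_ge0.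
apply: le_lt_trans (@int_push _ _ _ _ _ P (emap g) mG (fun x0 => (H x0)%:E) H0) _.
case: aeP => N [mN PN0 sN].
pose Tp := (fun th => enorm (T th)) \_ (in_pow d Theta).
have Tp0 th : 0 <= Tp th by rewrite /Tp patchE; case: ifP => // _; exact: enorm_ge0.
have mTp : measurable_fun setT Tp.
  have mD : measurable (in_pow d Theta) by exact: measurable_in_pow.
  rewrite /Tp; apply/(measurable_restrictT _ mD).
  exact: measurableT_comp (@measurable_enorm R k) mT.
pose F := fun th => (C0 * (a0 + a1 * enorm (emap g th)) * Tp th)%:E.
apply: le_lt_trans (@int_mono_ae _ _ _ P N _ F mN PN0 _ _ _) _.
- by move=> th; apply: H0.
- move=> th; rewrite /F lee_fin; apply: mulr_ge0 => //.
  apply: mulr_ge0 => //; apply: addr_ge0 => //; apply: mulr_ge0 => //; exact: enorm_ge0.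
- move=> th Nth.
  have hth : in_pow d Theta th.
    by apply: contrapT => hn; apply: Nth; apply: sN.
  by rewrite /H /F inv_emap// /Tp patchE mem_set.
have mEg : measurable_fun setT (fun th : d.-tuple R => enorm (emap g th)).
  exact: measurableT_comp (@measurable_enorm R d) mG.
have -> : F = (fun th => (C0 * a0)%:E * (Tp th)%:E + (C0 * a1)%:E * (enorm (emap g th) * Tp th)%:E)%E.
  by apply: funext => th; rewrite /F -!EFinM -EFinD; congr EFin; ring.
rewrite ge0_integralD//; first last.
- apply: emeasurable_funM => //; apply/measurable_EFinP.
  exact: measurable_funM.
- move=> th _; rewrite -EFinM lee_fin; apply: mulr_ge0; first exact: mulr_ge0.
  by apply: mulr_ge0; [exact: enorm_ge0|exact: Tp0].
- by apply: emeasurable_funM => //; apply/measurable_EFinP.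
- move=> th _; rewrite -EFinM lee_fin; apply: mulr_ge0; [exact: mulr_ge0|exact: Tp0].
rewrite ge0_integralZl//.
rewrite ge0_integralZl//.
all: try by move=> th _; rewrite lee_fin; first [exact: Tp0 | apply: mulr_ge0; [exact: enorm_ge0|exact: Tp0]].
all: try by rewrite lee_fin mulr_ge0.
all: try by apply/measurable_EFinP; exact: measurable_funM.
apply: lte_add_pinfty; apply: lte_mul_pinfty => //; rewrite ?lee_fin ?mulr_ge0//.
all: try exact: exprn_ge0.
all: try exact: normr_ge0.
all: try by apply/measurable_EFinP.
- apply: le_lt_trans hT; apply: int_mono => th; rewrite lee_fin //.
  by rewrite /Tp patchE; case: ifP => // _; exact: enorm_ge0.
- apply: le_lt_trans hgT; apply: int_mono => th; rewrite lee_fin.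
    by rewrite mulr_ge0// enorm_ge0.
  by rewrite ler_wpM2l ?enorm_ge0// /Tp patchE; case: ifP => // _; exact: enorm_ge0.
Qed.
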